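(* Let $n\ge 2$ and let $h_{ab}\in\Gamma_{\mathrm{pc}}(T^*\mathbb{R}^n\otimes_s T^*\mathbb{R}^n)$ be a smooth, past-compact, symmetric $(0,2)$-tensor field on $n$-dimensional Minkowski spacetime, with trace $h:=\eta^{ab}h_{ab}$. Then there exist unique smooth past-compact fields $w\in C^\infty_{\mathrm{pc}}(\mathbb{R}^n)$, $v^{\mathrm{T}}_a\in\Gamma_{\mathrm{pc}}(T^*\mathbb{R}^n)$, $h^{\mathrm{TT}}_{ab}\in\Gamma_{\mathrm{pc}}(T^*\mathbb{R}^n\otimes_s T^*\mathbb{R}^n)$ with $\partial^a v^{\mathrm{T}}_a=0$, $\partial^a h^{\mathrm{TT}}_{ab}=0$ and $\eta^{ab}h^{\mathrm{TT}}_{ab}=0$, such that $$h_{ab}=h^{\mathrm{S}}_{ab}+h^{\mathrm{V}}_{ab}+h^{\mathrm{TT}}_{ab},\qquad h^{\mathrm{S}}_{ab}:=\Big(\partial_a\partial_b-\tfrac1n\eta_{ab}\square\Big)w+\tfrac1n\eta_{ab}h,\qquad h^{\mathrm{V}}_{ab}:=\partial_a v^{\mathrm{T}}_b+\partial_b v^{\mathrm{T}}_a .$$ Moreover, $w$ and $v^{\mathrm{T}}_a$ are given explicitly by $$w=\frac{n}{n-1}\,\mathsf{G}_{\mathrm{ret}}^{\circ 2}\Big(\partial^a\partial^b h_{ab}-\tfrac1n\square h\Big),\qquad v^{\mathrm{T}}_b=\mathsf{G}_{\mathrm{ret}}\Big(\partial^a h_{ab}-\tfrac1n\partial_b h-\tfrac{n-1}{n}\partial_b\square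 w\Big).$$
   Context: Minkowski spacetime $(\mathbb{R}^n,\eta_{ab})$ with $\eta=\mathrm{diag}(-1,1,\dots,1)$; indices are raised and lowered with $\eta$; $\square:=\eta^{ab}\partial_a\partial_b$. A set $A\subset\mathbb{R}^n$ is past-compact if $A\cap J^-(K)$ is compact for every compact $K$, where $J^-$ denotes the causal past; $C^\infty_{\mathrm{pc}}$, $\Gamma_{\mathrm{pc}}$ denote smooth functions/sections with past-compact support. $\mathsf{G}_{\mathrm{ret}}$ is the retarded Green operator of $\square$, i.e. the unique linear map $C^\infty_{\mathrm{pc}}\to C^\infty_{\mathrm{pc}}$ with $\square\mathsf{G}_{\mathrm{ret}}f=f$ and $\mathsf{G}_{\mathrm{ret}}\square f=f$ (applied componentwise to tensors), and $\mathsf{G}_{\mathrm{ret}}^{\circ 2}=\mathsf{G}_{\mathrm{ret}}\circ\mathsf{G}_{\mathrm{ret}}$. *)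

(* Defs.v *)
(* Minkowski spacetime R^n is modelled as 'rV[R]_n
   (R : realType), index 0 is the time coordinate, eta = diag(-1,1,...,1). *)
From HB Require Import structures.
From mathcomp Require Import all_boot all_order all_algebra.
From mathcomp Require Import all_classical all_reals all_analysis.
Set Implicit Arguments. Unset Strict Implicit. Unset Printing Implicit Defensive.
Import Order.TTheory GRing.Theory Num.Theory.
Import numFieldNormedType.Exports.
Local Open Scope classical_set_scope.
Local Open Scope ring_scope.

Section Minkowski.
Variables (R : realType) (n : nat).
Notation pt := 'rV[R]_n.

(* diagonal entries of the Minkowski metric (equal to those of its inverse) *)
Definition meta (a : 'I_n) : R := if val a == 0%N then -1 else 1.
Definition etam (a b : 'I_n) : R := if a == b then meta a else 0.

Definition evec (a : 'I_n) : pt := delta_mx 0 a.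

Definition partial (a : 'I_n) (f : pt -> R) : pt -> R :=
  fun x => derive f x (evec a).

Definition iter_partial (l : seq 'I_n) (f : pt -> R) : pt -> R :=
  foldr partial f l.

Definition smooth (f : pt -> R) : Prop :=
  forall (l : seq 'I_n) (x : pt), differentiable (iter_partial l f) x.

Definition box (f : pt -> R) : pt -> R :=
  fun x => \sum_(a < n) meta a * partial a (partial a f) x.

(* causal relation: y is in the causal past of x (J^-(x)), i.e. x - y is
   future-directed causal or zero *)
Definition causal_past (y x : pt) : Prop :=
  let d := x - y in
  (forall i : 'I_n, val i = 0%N -> 0 <= d 0 i) /\
  \sum_(i < n) meta i * (d 0 i) ^+ 2 <= 0.

Definition Jminus (K : set pt) : set pt :=
  [set y | exists2 x, K x & causal_past y x].

Definition past_compact (A : set pt) : Prop :=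
  forall K : set pt, compact K -> compact (A `&` Jminus K).

Definition pc_scalar (f : pt -> R) : Prop :=
  past_compact (closure [set x | f x != 0]).
Definition pc_covector (v : 'I_n -> pt -> R) : Prop :=
  past_compact (closure [set x | exists a, v a x != 0]).
Definition pc_tensor2 (h : 'I_n -> 'I_n -> pt -> R) : Prop :=
  past_compact (closure [set x | exists a b, h a b x != 0]).

Definition is_retarded_green (G : (pt -> R) -> (pt -> R)) : Prop :=
  (forall f, smooth f -> pc_scalar f ->
     [/\ smooth (G f), pc_scalar (G f), box (G f) = f & G (box f) = f]) /\
  (forall (c : R) f g, smooth f -> pc_scalar f -> smooth g -> pc_scalar g ->
     G (fun x => c * f x + g x) = (fun x => c * G f x + G g x)).

End Minkowski.
Arguments meta {R n}.
Arguments etam {R n}.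
Arguments evec {R n}.

(* Main.v *)
Require Import Defs.
From HB Require Import structures.
From mathcomp Require Import all_boot all_order all_algebra.
From mathcomp Require Import all_classical all_reals all_analysis.
From mathcomp Require Import ring lra.
Set Implicit Arguments. Unset Strict Implicit. Unset Printing Implicit Defensive.
Import Order.TTheory GRing.Theory Num.Theory.
Import numFieldNormedType.Exports.
Local Open Scope classical_set_scope.
Local Open Scope ring_scope.

Section Lib.
Variables (R : realType) (n : nat).
Notation pt := 'rV[R]_n.
Implicit Types (f g F : pt -> R).

Definition Dall f := forall x, differentiable f x.

Lemma smooth_Dall f : smooth f -> Dall f.
Proof. by move=> sf x; exact: (sf [::] x). Qed.

Lemma smooth_partial a f : smooth f -> smooth (partial a f).
Proof.
move=> sf l x; have := sf (l ++ [:: a]) x.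
by rewrite /iter_partial foldr_cat.
Qed.

Lemma partialD a f g : Dall f -> Dall g ->
  partial a (fun y => f y + g y) = (fun y => partial a f y + partial a g y).
Proof.
move=> df dg; apply/funext => x; rewrite /partial.
have H := deriveD ((@diff_derivable _ _ _ _ _ (evec a) (df x))) ((@diff_derivable _ _ _ _ _ (evec a) (dg x))); exact H.
Qed.

Lemma partialZ a (c : R) f : Dall f ->
  partial a (fun y => c * f y) = (fun y => c * partial a f y).
Proof.
move=> df; apply/funext => x; rewrite /partial.
have H := deriveMl c ((@diff_derivable _ _ _ _ _ (evec a) (df x))); exact H.
Qed.

Lemma partialN a f : Dall f ->
  partial a (fun y => - f y) = (fun y => - partial a f y).
Proof.
move=> df; apply/funext => x; rewrite /partial.
have H := deriveN ((@diff_derivable _ _ _ _ _ (evec a) (df x))); exact H.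
Qed.

Lemma partialB a f g : Dall f -> Dall g ->
  partial a (fun y => f y - g y) = (fun y => partial a f y - partial a g y).
Proof.
move=> df dg; apply/funext => x; rewrite /partial.
have H := deriveB ((@diff_derivable _ _ _ _ _ (evec a) (df x))) ((@diff_derivable _ _ _ _ _ (evec a) (dg x))); exact H.
Qed.

Lemma partial_cst a (k : R) : partial a (fun _ : pt => k) = (fun _ => 0).
Proof. by apply/funext => x; rewrite /partial derive_cst. Qed.

Lemma DallD f g : Dall f -> Dall g -> Dall (fun y => f y + g y).
Proof. by move=> df dg x; exact: differentiableD. Qed.
Lemma DallB f g : Dall f -> Dall g -> Dall (fun y => f y - g y).
Proof. by move=> df dg x; exact: differentiableB. Qed.
Lemma DallN f : Dall f -> Dall (fun y => - f y).
Proof. by move=> df x; exact: differentiableN. Qed.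
Lemma DallZ (c : R) f : Dall f -> Dall (fun y => c * f y).
Proof. by move=> df x; exact: (@differentiableM _ _ (cst c) f x _ (df x)). Qed.
Lemma Dall_cst (k : R) : Dall (fun _ : pt => k).
Proof. by move=> x; exact: differentiable_cst. Qed.

Lemma smoothD f g : smooth f -> smooth g -> smooth (fun y => f y + g y).
Proof.
move=> sf sg l; have -> : iter_partial l (fun y => f y + g y) =
   (fun y => iter_partial l f y + iter_partial l g y).
  elim: l => [//|a l IH] /=; rewrite IH partialD //.
by move=> x; apply: differentiableD; [exact: sf|exact: sg].
Qed.

Lemma smoothZ (c : R) f : smooth f -> smooth (fun y => c * f y).
Proof.
move=> sf l; have -> : iter_partial l (fun y => c * f y) =
   (fun y => c * iter_partial l f y).
  elim: l => [//|a l IH] /=; rewrite IH partialZ //.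
by apply: DallZ => x; exact: sf.
Qed.

Lemma smoothN f : smooth f -> smooth (fun y => - f y).
Proof.
move=> sf; have -> : (fun y => - f y) = (fun y => (-1) * f y).
  by apply/funext => y; rewrite mulN1r.
exact: smoothZ.
Qed.

Lemma smoothB f g : smooth f -> smooth g -> smooth (fun y => f y - g y).
Proof. by move=> sf sg; apply: smoothD => //; exact: smoothN. Qed.

Lemma smooth_cst (k : R) : smooth (fun _ : pt => k).
Proof.
move=> l; have -> : iter_partial l (fun _ : pt => k) = (fun _ => if l is [::] then k else 0).
  elim: l => [//|a l IH] /=; rewrite IH; case: l {IH} => [|? ?]; exact: partial_cst.
exact: Dall_cst.
Qed.

Lemma smooth_sum (I : Type) (r : seq I) (F : I -> pt -> R) :
  (forall i, smooth (F i)) -> smooth (fun y => \sum_(i <- r) F i y).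
Proof.
move=> sF; elim: r => [|i r IH].
  have -> : (fun y : pt => \sum_(i <- [::]) F i y) = (fun _ => 0).
    by apply/funext => y; rewrite big_nil.
  exact: smooth_cst.
have -> : (fun y => \sum_(j <- i :: r) F j y) = (fun y => F i y + \sum_(j <- r) F j y).
  by apply/funext => y; rewrite big_cons.
by apply: smoothD.
Qed.

Lemma partial_sum (I : Type) (r : seq I) (F : I -> pt -> R) a :
  (forall i, Dall (F i)) ->
  partial a (fun y => \sum_(i <- r) F i y) = (fun y => \sum_(i <- r) partial a (F i) y).
Proof.
move=> dF; elim: r => [|i r IH].
  have -> : (fun y : pt => \sum_(i <- [::]) F i y) = (fun _ => 0).
    by apply/funext => y; rewrite big_nil.
  by rewrite partial_cst; apply/funext => y; rewrite big_nil.
have -> : (fun y => \sum_(j <- i :: r) F j y) = (fun y => F i y + \sum_(j <- r) F j y).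
  by apply/funext => y; rewrite big_cons.
rewrite partialD ?IH //; last first.
  elim: (r) => [|j s IHs].
    have -> : (fun y : pt => \sum_(i <- [::]) F i y) = (fun _ => 0).
      by apply/funext => y; rewrite big_nil.
    exact: Dall_cst.
  have -> : (fun y => \sum_(k <- j :: s) F k y) = (fun y => F j y + \sum_(k <- s) F k y).
    by apply/funext => y; rewrite big_cons.
  exact: DallD.
by apply/funext => y; rewrite big_cons.
Qed.

Lemma smooth_box f : smooth f -> smooth (box f).
Proof.
move=> sf; apply: smooth_sum => a; apply: smoothZ.
by do 2 apply: smooth_partial.
Qed.


Lemma line_derive F (y w : pt) (s : R) : Dall F ->
  is_derive s 1 (fun t : R => F (y + t *: w)) (derive F (y + s *: w) w).
Proof.
move=> dF.
have E : (fun h : R => h^-1 *: ((fun t : R => F (y + t *: w)) (h *: 1 + s) -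
                                   F (y + s *: w))) =
         (fun h : R => h^-1 *: (F (h *: w + (y + s *: w)) - F (y + s *: w))).
  apply/funext => h; congr (_ *: (F _ - _)).
  by rewrite scalerDl [h *: 1]mulr1 addrCA addrA.
split.
  rewrite /derivable /= E.
  exact: (@diff_derivable _ _ _ _ _ w (dF (y + s *: w))).
by rewrite /derive /= E.
Qed.

Lemma mvt_line F (y w : pt) (s : R) : Dall F -> 0 < s ->
  exists2 c, 0 < c < s & F (y + s *: w) - F y = s * derive F (y + c *: w) w.
Proof.
move=> dF s0.
have := @MVT R (fun t : R => F (y + t *: w)) (fun t => derive F (y + t *: w) w) 0 s s0.
case.
- by move=> t _; exact: line_derive.
- apply: continuous_subspaceT => t.
  apply: differentiable_continuous; apply/derivable1_diffP.
  by have [] := line_derive y w t dF.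
move=> c; rewrite in_itv /= => cs; rewrite scale0r addr0 subr0 => ->.
by exists c => //; rewrite mulrC.
Qed.


Lemma derive_shift' F (c z w : pt) :
  derive (fun y => F (y + c)) z w = derive F (z + c) w.
Proof. rewrite /derive /=. set u := (fun h : R => _). set u2 := (fun h : R => _). suff -> : u = u2 by []. by apply/funext => h; rewrite /u /u2 addrA. Qed.

Lemma Dall_shift F (c : pt) : Dall F -> Dall (fun y => F (y + c)).
Proof.
move=> dF z; apply: differentiable_comp => //.
Qed.

Lemma mixed F a b (x : pt) (s t : R) : smooth F -> 0 < s -> 0 < t ->
  exists sg : R, exists tu : R, [/\ 0 < sg < s, 0 < tu < t &
   F (x + s *: evec a + t *: evec b) - F (x + s *: evec a)
     - (F (x + t *: evec b) - F x) =
   s * t * partial b (partial a F) (x + sg *: evec a + tu *: evec b)].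
Proof.
move=> sF s0 t0.
have dF := smooth_Dall sF.
have dpF : Dall (partial a F) by apply: smooth_Dall; exact: smooth_partial.
pose G := fun z => F (z + t *: evec b) - F z.
have dG : Dall G by apply: DallB => //; exact: Dall_shift.
have [sg sgs E1] := mvt_line x (evec a) dG s0.
have [tu tut E2] := mvt_line (x + sg *: evec a) (evec b) dpF t0.
exists sg, tu; split => //.
have -> : F (x + s *: evec a + t *: evec b) - F (x + s *: evec a)
     - (F (x + t *: evec b) - F x) = G (x + s *: evec a) - G x by [].
rewrite E1.
have -> : derive G (x + sg *: evec a) (evec a) =
   partial a F (x + sg *: evec a + t *: evec b) - partial a F (x + sg *: evec a).
  rewrite /G.
  have H := deriveB (@diff_derivable _ _ _ _ _ (evec a) (Dall_shift (t *: evec b) dF (x + sg *: evec a)))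
                    (@diff_derivable _ _ _ _ _ (evec a) (dF (x + sg *: evec a))).
  rewrite /= in H; rewrite H derive_shift' //.
rewrite E2 mulrA //.
Qed.


Lemma swap4 (A B C D : R) : A - B - (C - D) = A - C - (B - D).
Proof. ring. Qed.

Lemma smooth_cont F l x : smooth F -> {for x, continuous (iter_partial l F)}.
Proof. by move=> sF; apply: differentiable_continuous; exact: sF. Qed.

Lemma approx_eq (g1 g2 : pt -> R) (x u w : pt) :
  {for x, continuous g1} -> {for x, continuous g2} ->
  (forall s : R, 0 < s -> exists sg1 tu1 sg2 tu2 : R,
     [/\ 0 < sg1 < s, 0 < tu1 < s, 0 < sg2 < s, 0 < tu2 < s &
         g1 (x + sg1 *: u + tu1 *: w) = g2 (x + tu2 *: u + sg2 *: w)]) ->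
  g2 x = g1 x.
Proof.
move=> c1 c2 Hs.
apply/eqP; rewrite -subr_eq0 -normr_eq0; apply/negPn/negP => nz.
have [d Ed] : exists d : R, d = `|g2 x - g1 x| by eexists.
have d0 : 0 < d by rewrite Ed lt_neqAle eq_sym nz normr_ge0.
have [e Ee] : exists e : R, e = d / 2 by eexists.
have e0 : 0 < e by rewrite Ee divr_gt0.
have n1 : \forall y \near x, `|g1 x - g1 y| < e.
  by move/cvgrPdist_lt : c1 => /(_ e e0).
have n2 : \forall y \near x, `|g2 x - g2 y| < e.
  by move/cvgrPdist_lt : c2 => /(_ e e0).
have [del del0 Hdel] : exists2 del : R, 0 < del & forall y, `|x - y| < del ->
    `|g1 x - g1 y| < e /\ `|g2 x - g2 y| < e.
  have [del del0 Hdel] := (nbhs_normP _ _).1 (filterI n1 n2).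
  by exists del => // y /Hdel.
have [N EN] : exists N : R, N = `|u| + `|w| + 1 by eexists.
have N0 : 0 < N by rewrite EN ltr_wpDl ?addr_ge0.
have [s Es] : exists s : R, s = del / N by eexists.
have s0 : 0 < s by rewrite Es divr_gt0.
have Hb : forall sg tu : R, 0 < sg < s -> 0 < tu < s ->
    `|x - (x + sg *: u + tu *: w)| < del.
  move=> sg tu /andP[sg0 sgs] /andP[tu0 tus].
  rewrite -addrA opprD addrA subrr add0r normrN.
  apply: (le_lt_trans (ler_normD _ _)).
  rewrite !normrZ (gtr0_norm sg0) (gtr0_norm tu0).
  have : sg * `|u| + tu * `|w| <= s * (`|u| + `|w|).
    by rewrite mulrDr lerD // ler_wpM2r // ltW.
  move/le_lt_trans; apply.
  rewrite Es mulrAC ltr_pdivrMr // ltr_pM2l //.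
  by rewrite EN ltrDl.
have [sg1 [tu1 [sg2 [tu2 [H1 H2 H3 H4 Eq]]]]] := Hs s s0.
have [A1 _] := Hdel _ (Hb _ _ H1 H2).
have [_ A2] := Hdel _ (Hb _ _ H4 H3).
have Hd : d <= `|g2 x - g2 (x + tu2 *: u + sg2 *: w)| +
                `|g1 x - g1 (x + sg1 *: u + tu1 *: w)|.
  rewrite Ed (_ : g2 x - g1 x = (g2 x - g2 (x + tu2 *: u + sg2 *: w)) -
                  (g1 x - g1 (x + sg1 *: u + tu1 *: w))).
    exact: ler_normB.
  by rewrite Eq opprB addrA subrK.
have : d < e + e by apply: (le_lt_trans Hd); rewrite ltrD.
by rewrite Ee -splitr ltxx.
Qed.

Lemma schwarz F a b : smooth F ->
  partial a (partial b F) = partial b (partial a F).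
Proof.
move=> sF; apply/funext => x.
apply: (@approx_eq _ _ x (evec a) (evec b)).
- exact (@smooth_cont F [:: b; a] x sF).
- exact (@smooth_cont F [:: a; b] x sF).
move=> s s0.
have [sg1 [tu1 [H1 H2 E1]]] := mixed a b x sF s0 s0.
have [sg2 [tu2 [H3 H4 E2]]] := mixed b a x sF s0 s0.
exists sg1, tu1, sg2, tu2; split; [exact: H1|exact: H2|exact: H3|exact: H4|].
have P : x + s *: evec b + s *: evec a = x + s *: evec a + s *: evec b :> pt by rewrite addrAC.
have P2 : x + sg2 *: evec b + tu2 *: evec a = x + tu2 *: evec a + sg2 *: evec b :> pt by rewrite addrAC.
rewrite P P2 in E2.
have ss : s * s != 0 by rewrite mulf_neq0 // gt_eqF.
apply: (mulfI ss).
exact: (etrans (esym E1) (etrans (swap4 _ _ _ _) E2)).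
Qed.

Definition pcz f := exists Z : set pt,
  [/\ closed Z, past_compact Z & [set x | f x != 0] `<=` Z].

Lemma pc_sub (A B : set pt) : closed A -> A `<=` B -> past_compact B ->
  past_compact A.
Proof.
move=> cA AB pB K cK.
have -> : A `&` Jminus K = (B `&` Jminus K) `&` A.
  by rewrite setIAC (setIC B) (setIidl AB).
by apply: compact_closedI; [exact: pB|exact: cA].
Qed.

Lemma pcU (A B : set pt) : past_compact A -> past_compact B ->
  past_compact (A `|` B).
Proof. by move=> pA pB K cK; rewrite setIUl; apply: compactU; [exact: pA|exact: pB]. Qed.

Lemma closure_in (S Z : set pt) : closed Z -> S `<=` Z -> closure S `<=` Z.
Proof. by move=> cZ sZ x cx; have := closureS sZ cx; rewrite -(closure_id Z).1. Qed.

Lemma pcz_scalar f : pcz f -> pc_scalar f.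
Proof.
case=> Z [cZ pZ sZ].
have cc : closed (closure [set x | f x != 0]) by exact: closed_closure.
exact (pc_sub cc (closure_in cZ sZ) pZ).
Qed.

Lemma scalar_pcz f : pc_scalar f -> pcz f.
Proof.
move=> pf; exists (closure [set x | f x != 0]); split => //.
  exact: closed_closure.
exact: subset_closure.
Qed.

Lemma pcz0 : pcz (fun _ => 0).
Proof.
exists set0; split.
- exact: closed0.
- by move=> K cK; rewrite set0I; exact: compact0.
- by move=> x /=; rewrite eqxx.
Qed.

Lemma pczD f g : pcz f -> pcz g -> pcz (fun y => f y + g y).
Proof.
case=> [A [cA pA sA]] [B [cB pB sB]]; exists (A `|` B); split.
- exact: closedU.
- exact: pcU.
move=> x /= nz; have [fx|fx] := eqVneq (f x) 0.
  by right; apply: sB => /=; rewrite fx add0r in nz.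
by left; exact: sA.
Qed.

Lemma pczMl (k : pt -> R) f : pcz f -> pcz (fun y => k y * f y).
Proof.
case=> [A [cA pA sA]]; exists A; split => // x /= nz; apply: sA => /=.
by apply: contraNneq nz => ->; rewrite mulr0.
Qed.

Lemma pczMr (k : pt -> R) f : pcz f -> pcz (fun y => f y * k y).
Proof.
case=> [A [cA pA sA]]; exists A; split => // x /= nz; apply: sA => /=.
by apply: contraNneq nz => ->; rewrite mul0r.
Qed.

Lemma pczN f : pcz f -> pcz (fun y => - f y).
Proof.
case=> [A [cA pA sA]]; exists A; split => // x /= nz; apply: sA => /=.
by rewrite -oppr_eq0.
Qed.

Lemma pczB f g : pcz f -> pcz g -> pcz (fun y => f y - g y).
Proof. by move=> pf pg; apply: pczD => //; exact: pczN. Qed.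

Lemma pcz_sum (I : Type) (r : seq I) (Fs : I -> pt -> R) :
  (forall i, pcz (Fs i)) -> pcz (fun y => \sum_(i <- r) Fs i y).
Proof.
move=> pF; elim: r => [|i r IH].
  have -> : (fun y : pt => \sum_(i <- [::]) Fs i y) = (fun _ => 0).
    by apply/funext => y; rewrite big_nil.
  exact: pcz0.
have -> : (fun y => \sum_(j <- i :: r) Fs j y) = (fun y => Fs i y + \sum_(j <- r) Fs j y).
  by apply/funext => y; rewrite big_cons.
exact: pczD.
Qed.

Lemma partial_supp a f :
  [set x | partial a f x != 0] `<=` closure [set x | f x != 0].
Proof.
move=> x /= nz B nB; apply: contrapT => hne.
have fB : forall y, B y -> f y = 0.
  move=> y By; apply/eqP/negPn/negP => fy; apply: hne; exists y; split => //.
have nf : \near x, f x = (cst 0 : pt -> R) x.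
  by apply: filterS nB => y By; rewrite fB.
move: nz; rewrite /partial (near_eq_derive _ nf) derive_cst.
by rewrite eqxx.
Qed.

Lemma pcz_partial a f : pcz f -> pcz (partial a f).
Proof.
case=> [A [cA pA sA]]; exists A; split => // x /partial_supp.
exact: closure_in.
Qed.

Lemma sumsq_nz (I : finType) (F : I -> R) i : F i != 0 -> \sum_j F j * F j != 0.
Proof.
move=> nz; rewrite (bigD1 i) //=; apply: lt0r_neq0.
have h1 : 0 < F i * F i by rewrite lt_def mulf_neq0 //= -expr2 sqr_ge0.
apply: (lt_le_trans h1); rewrite lerDl; apply: sumr_ge0 => j _.
by rewrite -expr2 sqr_ge0.
Qed.

Lemma pc_cov (v : 'I_n -> pt -> R) : (forall a, pcz (v a)) -> pc_covector v.
Proof.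
move=> pv.
have [Z [cZ pZ sZ]] : pcz (fun y => \sum_a v a y * v a y).
  by apply: pcz_sum => a; apply: pczMl.
have cc : closed (closure [set x | exists a, v a x != 0]) by exact: closed_closure.
apply: (pc_sub cc _ pZ); apply: closure_in => // x [a nz]; apply: sZ => /=.
exact: (sumsq_nz nz).
Qed.

Lemma pc_ten (t : 'I_n -> 'I_n -> pt -> R) : (forall a b, pcz (t a b)) -> pc_tensor2 t.
Proof.
move=> pt.
have [Z [cZ pZ sZ]] : pcz (fun y => \sum_a \sum_b t a b y * t a b y).
  by apply: pcz_sum => a; apply: pcz_sum => b; apply: pczMl.
have cc : closed (closure [set x | exists a b, t a b x != 0]) by exact: closed_closure.
apply: (pc_sub cc _ pZ); apply: closure_in => // x [a [b nz]]; apply: sZ => /=.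
rewrite (bigD1 a) //=; apply: lt0r_neq0.
have h1 : 0 < \sum_b0 t a b0 x * t a b0 x.
  rewrite lt_def (sumsq_nz (F := fun b0 => t a b0 x) nz) /=; apply: sumr_ge0 => j _.
  by rewrite -expr2 sqr_ge0.
apply: (lt_le_trans h1); rewrite lerDl; apply: sumr_ge0 => j _.
by apply: sumr_ge0 => k _; rewrite -expr2 sqr_ge0.
Qed.

Lemma cov_pcz (v : 'I_n -> pt -> R) a : pc_covector v -> pcz (v a).
Proof.
move=> pv; exists (closure [set x | exists a, v a x != 0]); split => //.
  exact: closed_closure.
by move=> x nz; apply: subset_closure; exists a.
Qed.

Lemma ten_pcz (t : 'I_n -> 'I_n -> pt -> R) a b : pc_tensor2 t -> pcz (t a b).
Proof.
move=> pv; exists (closure [set x | exists a b, t a b x != 0]); split => //.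
  exact: closed_closure.
by move=> x nz; apply: subset_closure; exists a, b.
Qed.

End Lib.

Section Ops.
Variables (R : realType) (n : nat).
Notation pt := 'rV[R]_n.
Implicit Types (f g F : pt -> R).

Ltac smt := match goal with
 | |- forall _, _ => intro; smt
 | |- smooth (partial _ _) => apply: smooth_partial; smt
 | |- smooth (box _) => apply: smooth_box; smt
 | |- smooth (fun y => partial ?a ?f y) => apply: (smooth_partial a (f:=f)); smt
 | |- smooth (fun y => box ?f y) => apply: (smooth_box (f:=f)); smt
 | |- smooth (fun y => @?A y + @?B y) => apply: (smoothD (f:=A) (g:=B)); smt
 | |- smooth (fun y => @?A y - @?B y) => apply: (smoothB (f:=A) (g:=B)); smt
 | |- smooth (fun y => - @?A y) => apply: (smoothN (f:=A)); smt
 | |- smooth (fun y => ?c * @?A y) => apply: (smoothZ c (f:=A)); smt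
 | |- smooth (fun y => \sum_(i < _) _) => apply: smooth_sum; smt
 | |- smooth (fun _ => ?k) => exact: smooth_cst
 | |- smooth _ => first [assumption |
      match goal with H : forall _, smooth _ |- _ => apply: H end |
      match goal with H : forall _ _, smooth _ |- _ => apply: H end]
 end.

Lemma pD a f g : smooth f -> smooth g ->
  partial a (fun y => f y + g y) = (fun y => partial a f y + partial a g y).
Proof. by move=> sf sg; apply: partialD; apply: smooth_Dall. Qed.
Lemma pB a f g : smooth f -> smooth g ->
  partial a (fun y => f y - g y) = (fun y => partial a f y - partial a g y).
Proof. by move=> sf sg; apply: partialB; apply: smooth_Dall. Qed.
Lemma pZ a (c : R) f : smooth f ->
  partial a (fun y => c * f y) = (fun y => c * partial a f y).
Proof. by move=> sf; apply: partialZ; apply: smooth_Dall. Qed.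
Lemma pS a (Fs : 'I_n -> pt -> R) : (forall i, smooth (Fs i)) ->
  partial a (fun y => \sum_(i < n) Fs i y) = (fun y => \sum_(i < n) partial a (Fs i) y).
Proof. by move=> sF; apply: partial_sum => i; apply: smooth_Dall. Qed.

Lemma meta2 (a : 'I_n) : (meta a : R) * meta a = 1.
Proof. by rewrite /meta; case: ifP => _; rewrite ?mulN1r ?opprK ?mul1r. Qed.

Lemma sum_delta (F : 'I_n -> R) (b : 'I_n) :
  \sum_(a < n) meta a * (etam a b * F a) = F b.
Proof.
rewrite (bigD1 b) //= big1 ?addr0.
  by rewrite /etam eqxx mulrA meta2 mul1r.
by move=> a nab; rewrite /etam (negbTE nab) mul0r mulr0.
Qed.


Lemma box_partial c f : smooth f -> partial c (box f) = box (partial c f).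
Proof.
move=> sf; rewrite /box pS; [ | smt .. ].
apply/funext => x; apply: eq_bigr => a _.
rewrite pZ; [ | smt .. ].
rewrite (schwarz (F:=partial a f) c a); [ | smt .. ].
by rewrite (schwarz (F:=f) c a).
Qed.

Definition divv (v : 'I_n -> pt -> R) : pt -> R :=
  fun x => \sum_(a < n) meta a * partial a (v a) x.
Definition Div (t : 'I_n -> 'I_n -> pt -> R) (b : 'I_n) : pt -> R :=
  fun x => \sum_(a < n) meta a * partial a (t a b) x.
Definition HS (w tr : pt -> R) (a b : 'I_n) : pt -> R :=
  fun x => partial a (partial b w) x - n%:R^-1 * etam a b * box w x
           + n%:R^-1 * etam a b * tr x.
Definition HV (v : 'I_n -> pt -> R) (a b : 'I_n) : pt -> R :=
  fun x => partial a (v b) x + partial b (v a) x.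

Lemma smooth_divv v : (forall a, smooth (v a)) -> smooth (divv v).
Proof. by move=> sv; rewrite /divv; smt. Qed.
Lemma smooth_Div t b : (forall a b, smooth (t a b)) -> smooth (Div t b).
Proof. by move=> st; rewrite /Div; smt. Qed.
Lemma smooth_HS w tr a b : smooth w -> smooth tr -> smooth (HS w tr a b).
Proof. by move=> sw st; rewrite /HS; smt. Qed.
Lemma smooth_HV v a b : (forall a, smooth (v a)) -> smooth (HV v a b).
Proof. by move=> sv; rewrite /HV; smt. Qed.

Lemma Div_HS w tr b : smooth w -> smooth tr ->
  Div (HS w tr) b = fun x => (1 - n%:R^-1) * partial b (box w) x + n%:R^-1 * partial b tr x.
Proof.
move=> sw st; apply/funext => x; rewrite /Div.
have E : forall a, partial a (HS w tr a b) x =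
   partial a (partial a (partial b w)) x - n%:R^-1 * (etam a b * partial a (box w) x)
   + n%:R^-1 * (etam a b * partial a tr x).
  move=> a; rewrite /HS pD; [ | smt .. ].
  rewrite pB; [ | smt .. ]. rewrite pZ; [ | smt .. ]. rewrite pZ; [ | smt .. ].
  by rewrite /= !mulrA.
under eq_bigr => a _ do rewrite E.
have -> : \sum_(a < n) meta a * (partial a (partial a (partial b w)) x -
       n%:R^-1 * (etam a b * partial a (box w) x) + n%:R^-1 * (etam a b * partial a tr x))
   = box (partial b w) x - n%:R^-1 * \sum_(a < n) meta a * (etam a b * partial a (box w) x)
     + n%:R^-1 * \sum_(a < n) meta a * (etam a b * partial a tr x).
  rewrite /box !mulr_sumr -sumrB -big_split /=; apply: eq_bigr => a _; ring.
rewrite !sum_delta box_partial //; ring.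
Qed.

Lemma Div_HV v b : (forall a, smooth (v a)) ->
  Div (HV v) b = fun x => box (v b) x + partial b (divv v) x.
Proof.
move=> sv; apply/funext => x; rewrite /Div /divv.
rewrite pS; [ | smt .. ].
rewrite /box -big_split /=; apply: eq_bigr => a _.
rewrite /HV pD; [ | smt .. ]. 
rewrite pZ; [ | smt .. ].
by rewrite mulrDr (schwarz (F:=v a) a b).
Qed.

Lemma sum_Div t : (forall a b, smooth (t a b)) -> forall x,
  \sum_(b < n) meta b * partial b (Div t b) x =
  \sum_(a < n) \sum_(b < n) meta a * meta b * partial a (partial b (t a b)) x.
Proof.
move=> st x; rewrite exchange_big /=; apply: eq_bigr => b _.
rewrite /Div pS; [ | smt .. ].
rewrite mulr_sumr; apply: eq_bigr => a _.
rewrite pZ; [ | smt .. ].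
rewrite (schwarz (F:=t a b) b a); [ring | exact: st].
Qed.

Lemma divv_box v : (forall a, smooth (v a)) -> forall x,
  \sum_(a < n) meta a * partial a (box (v a)) x = box (divv v) x.
Proof.
move=> sv x; rewrite {2}/box /divv.
have E : forall c, partial c (partial c (fun x => \sum_(a < n) meta a * partial a (v a) x)) =
     fun y => \sum_(a < n) meta a * partial c (partial c (partial a (v a))) y.
  move=> c; rewrite pS; [ | smt .. ].
  rewrite pS; [ | smt .. ].
  apply/funext => y; apply: eq_bigr => a _.
  rewrite pZ; [ | smt .. ].
  by rewrite pZ; [ | smt .. ].
under [RHS]eq_bigr => c _ do rewrite E.
under [RHS]eq_bigr => c _ do rewrite mulr_sumr.
rewrite exchange_big /=; apply: eq_bigr => a _.
rewrite box_partial; [ | smt .. ].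
rewrite /box mulr_sumr; apply: eq_bigr => c _.
by rewrite mulrCA.
Qed.

Lemma Div_D t1 t2 b : (forall a b, smooth (t1 a b)) -> (forall a b, smooth (t2 a b)) ->
  Div (fun a b x => t1 a b x + t2 a b x) b = fun x => Div t1 b x + Div t2 b x.
Proof.
move=> s1 s2; apply/funext => x; rewrite /Div -big_split /=; apply: eq_bigr => a _.
by rewrite pD ?mulrDr //; smt.
Qed.

Lemma Div_B t1 t2 b : (forall a b, smooth (t1 a b)) -> (forall a b, smooth (t2 a b)) ->
  Div (fun a b x => t1 a b x - t2 a b x) b = fun x => Div t1 b x - Div t2 b x.
Proof.
move=> s1 s2; apply/funext => x; rewrite /Div -sumrB /=; apply: eq_bigr => a _.
by rewrite pB ?mulrBr //; smt.
Qed.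

Lemma box_Z (c : R) f : smooth f -> box (fun x => c * f x) = fun x => c * box f x.
Proof.
move=> sf; apply/funext => x; rewrite /box mulr_sumr; apply: eq_bigr => a _.
rewrite pZ; [ | smt .. ]. rewrite pZ; [ | smt .. ].
by rewrite mulrCA.
Qed.

Lemma box_cst0 : box (fun _ : pt => 0) = fun _ => 0.
Proof.
apply/funext => x; rewrite /box big1 // => a _.
by rewrite !partial_cst mulr0.
Qed.

Lemma etamC (a b : 'I_n) : (etam a b : R) = etam b a.
Proof. by rewrite /etam eq_sym; case: eqP => // ->. Qed.

Lemma sum_meta2 : \sum_(a < n) (meta a : R) * meta a = n%:R.
Proof.
under eq_bigr => a _ do rewrite meta2.
by rewrite sumr_const card_ord.
Qed.

Lemma sum_meta_etam (F : 'I_n -> R) :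
  \sum_(a < n) meta a * (etam a a * F a) = \sum_(a < n) F a.
Proof. by apply: eq_bigr => a _; rewrite /etam eqxx mulrA meta2 mul1r. Qed.

End Ops.

Ltac smt := match goal with
 | |- forall _, _ => intro; smt
 | |- smooth (fun y => ?f y) => change (smooth f); smt
 | |- smooth (partial _ _) => apply: smooth_partial; smt
 | |- smooth (box _) => apply: smooth_box; smt
 | |- smooth (HS _ _ _ _) => apply: smooth_HS; smt
 | |- smooth (HV _ _ _) => apply: smooth_HV; smt
 | |- smooth (divv _) => apply: smooth_divv; smt
 | |- smooth (Div _ _) => apply: smooth_Div; smt
 | |- smooth (fun y => partial ?a ?f y) => apply: (smooth_partial a (f:=f)); smt
 | |- smooth (fun y => box ?f y) => apply: (smooth_box (f:=f)); smt
 | |- smooth (fun y => @?A y + @?B y) => apply: (smoothD (f:=A) (g:=B)); smt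
 | |- smooth (fun y => @?A y - @?B y) => apply: (smoothB (f:=A) (g:=B)); smt
 | |- smooth (fun y => - @?A y) => apply: (smoothN (f:=A)); smt
 | |- smooth (fun y => ?c * @?A y) => apply: (smoothZ c (f:=A)); smt
 | |- smooth (fun y => \sum_(i < _) _) => apply: smooth_sum; smt
 | |- smooth (fun _ => ?k) => exact: smooth_cst
 | |- smooth _ => first [assumption |
      match goal with H : forall _, smooth _ |- _ => apply: H end |
      match goal with H : forall _ _, smooth _ |- _ => apply: H end]
 end.

Section PczBox.
Variables (R : realType) (n : nat).
Lemma pcz_box (f : 'rV[R]_n -> R) : pcz f -> pcz (box f).
Proof.
move=> pf; rewrite /box; apply: pcz_sum => a.
apply: (pczMl (fun _ => meta a)); do 2 apply: pcz_partial; exact: pf.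
Qed.
End PczBox.

Ltac pct := match goal with
 | |- forall _, _ => intro; pct
 | |- pcz (fun y => ?f y) => change (pcz f); pct
 | |- pcz (partial _ _) => apply: pcz_partial; pct
 | |- pcz (box _) => apply: pcz_box; pct
 | |- pcz (fun y => partial ?a ?f y) => apply: (pcz_partial a (f:=f)); pct
 | |- pcz (fun y => box ?f y) => apply: (pcz_box (f:=f)); pct
 | |- pcz (fun y => @?A y + @?B y) => apply: (pczD (f:=A) (g:=B)); pct
 | |- pcz (fun y => @?A y - @?B y) => apply: (pczB (f:=A) (g:=B)); pct
 | |- pcz (fun y => - @?A y) => apply: (pczN (f:=A)); pct
 | |- pcz (fun y => ?c * @?A y) => apply: (pczMl (fun _ => c) (f:=A)); pct
 | |- pcz (fun y => \sum_(i < _) _) => apply: pcz_sum; pct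
 | |- pcz (fun _ => 0) => exact: pcz0
 | |- pcz _ => first [assumption |
      match goal with H : forall _, pcz _ |- _ => apply: H end |
      match goal with H : forall _ _, pcz _ |- _ => apply: H end]
 end.

Section Main.

Variables (R : realType) (n : nat).
Notation pt := 'rV[R]_n.
Variables (G : (pt -> R) -> (pt -> R)) (hG : is_retarded_green G).
Hypothesis (hn : (2 <= n)%N).
Variables (h : 'I_n -> 'I_n -> pt -> R).
Hypotheses (hsym : forall a b, h a b = h b a)
  (hsmooth : forall a b, smooth (h a b)) (hpc : pc_tensor2 h).

Lemma Gsm f : smooth f -> pcz f -> smooth (G f).
Proof. by move=> sf pf; case: (hG.1 f sf (pcz_scalar pf)). Qed.
Lemma Gpc f : smooth f -> pcz f -> pcz (G f).
Proof. by move=> sf pf; case: (hG.1 f sf (pcz_scalar pf)) => _ /scalar_pcz. Qed.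
Lemma GboxG f : smooth f -> pcz f -> box (G f) = f.
Proof. by move=> sf pf; case: (hG.1 f sf (pcz_scalar pf)). Qed.
Lemma Gbox f : smooth f -> pcz f -> G (box f) = f.
Proof. by move=> sf pf; case: (hG.1 f sf (pcz_scalar pf)). Qed.
Lemma G0 : G (fun _ => 0) = (fun _ => 0).
Proof.
have := @Gbox (fun _ => 0) (smooth_cst 0) (@pcz0 R n).
by rewrite box_cst0.
Qed.
Lemma GZ (c : R) f : smooth f -> pcz f -> G (fun x => c * f x) = (fun x => c * G f x).
Proof.
move=> sf pf.
have := hG.2 c f (fun _ => 0) sf (pcz_scalar pf) (smooth_cst 0) (pcz_scalar (@pcz0 R n)).
rewrite G0 => E.
have -> : (fun x => c * f x) = (fun x => c * f x + 0) by apply/funext => x; rewrite addr0.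
by rewrite E; apply/funext => x; rewrite addr0.
Qed.

Lemma n0 : (n%:R : R) != 0.
Proof. by rewrite pnatr_eq0 -lt0n (leq_trans _ hn). Qed.
Lemma n1 : (n%:R - 1 : R) != 0.
Proof. by rewrite subr_eq0 pnatr_eq1; case: (n) hn => [|[|]]. Qed.
Lemma ccE : (n%:R - 1) / n%:R = 1 - n%:R^-1 :> R.
Proof. by rewrite mulrBl (divff n0) mul1r. Qed.
Lemma kc : n%:R / (n%:R - 1) * ((n%:R - 1) / n%:R) = 1 :> R.
Proof. by field; rewrite n0 n1. Qed.

Lemma sh a b : smooth (h a b). Proof. exact: hsmooth. Qed.
Lemma ph a b : pcz (h a b). Proof. exact: ten_pcz. Qed.

Definition trh : pt -> R := fun x => \sum_(a < n) meta a * h a a x.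
Definition Sh : pt -> R := fun y => \sum_(a < n) \sum_(b < n)
   meta a * meta b * partial a (partial b (h a b)) y - n%:R^-1 * box trh y.
Definition wh : pt -> R := fun x => n%:R / (n%:R - 1) * G (G Sh) x.
Definition Fh (w : pt -> R) (b : 'I_n) : pt -> R :=
  fun y => \sum_(a < n) meta a * partial a (h a b) y
           - n%:R^-1 * partial b trh y - (n%:R - 1) / n%:R * partial b (box w) y.
Definition vh : 'I_n -> pt -> R := fun b => G (Fh wh b).
Definition hTTh : 'I_n -> 'I_n -> pt -> R :=
  fun a b x => h a b x - HS wh trh a b x - HV vh a b x.

Lemma s_tr : smooth trh. Proof. have := sh; rewrite /trh; smt. Qed.
Lemma p_tr : pcz trh. Proof. have := ph; rewrite /trh; pct. Qed.
Lemma s_S : smooth Sh. Proof. have := sh; have := s_tr; rewrite /Sh; smt. Qed.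
Lemma p_S : pcz Sh. Proof. have := ph; have := p_tr; rewrite /Sh; pct. Qed.

Lemma s_GS : smooth (G Sh). Proof. exact: Gsm s_S p_S. Qed.
Lemma p_GS : pcz (G Sh). Proof. exact: Gpc s_S p_S. Qed.
Lemma s_GGS : smooth (G (G Sh)). Proof. exact: Gsm s_GS p_GS. Qed.
Lemma p_GGS : pcz (G (G Sh)). Proof. exact: Gpc s_GS p_GS. Qed.
Lemma s_w : smooth wh. Proof. have := s_GGS; rewrite /wh; smt. Qed.
Lemma p_w : pcz wh. Proof. have := p_GGS; rewrite /wh; pct. Qed.

Lemma box_w : box wh = fun x => n%:R / (n%:R - 1) * G Sh x.
Proof. by rewrite /wh box_Z ?(GboxG s_GS p_GS) //; exact: s_GGS. Qed.
Lemma boxbox_w : box (box wh) = fun x => n%:R / (n%:R - 1) * Sh x.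
Proof. by rewrite box_w box_Z ?(GboxG s_S p_S) //; exact: s_GS. Qed.

Lemma s_F b : smooth (Fh wh b).
Proof. have := s_w; have := s_tr; have := sh; rewrite /Fh; smt. Qed.
Lemma p_F b : pcz (Fh wh b).
Proof. have := p_w; have := p_tr; have := ph; rewrite /Fh; pct. Qed.
Lemma s_v a : smooth (vh a). Proof. exact: Gsm (s_F a) (p_F a). Qed.
Lemma p_v a : pcz (vh a). Proof. exact: Gpc (s_F a) (p_F a). Qed.
Lemma box_v b : box (vh b) = Fh wh b.
Proof. exact: GboxG (s_F b) (p_F b). Qed.

Lemma partial_F a : partial a (Fh wh a) = fun y => partial a (Div h a) y
   - n%:R^-1 * partial a (partial a trh) y - (n%:R - 1) / n%:R * partial a (partial a (box wh)) y.
Proof.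
have := s_w; have := s_tr; have := sh => ? ? ?.
rewrite /Fh pB; [ | smt .. ]. rewrite pB; [ | smt .. ].
by rewrite pZ; [ rewrite pZ; [ by [] | smt ..] | smt .. ].
Qed.

Lemma divv_v : divv vh = fun _ => 0.
Proof.
have sv := s_v; have pv := p_v.
have E : box (divv vh) = fun _ => 0.
  apply/funext => x; rewrite -divv_box //.
  under eq_bigr => a _ do rewrite box_v partial_F.
  have -> : \sum_(a < n) meta a * (partial a (Div h a) x - n%:R^-1 * partial a (partial a trh) x
      - (n%:R - 1) / n%:R * partial a (partial a (box wh)) x) =
      \sum_(a < n) meta a * partial a (Div h a) x - n%:R^-1 * box trh x
      - (n%:R - 1) / n%:R * box (box wh) x.
    rewrite /box !mulr_sumr -!sumrB; apply: eq_bigr => a _; ring.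
  rewrite sum_Div; last exact: sh.
  rewrite boxbox_w.
  have := kc; rewrite /Sh => kc'.
  rewrite mulrA (mulrC ((n%:R - 1) / n%:R)) kc' mul1r; ring.
have sd : smooth (divv vh) by smt.
have pd : pcz (divv vh) by rewrite /divv; pct.
by rewrite -(Gbox sd pd) E G0.
Qed.

Lemma s_hTT a b : smooth (hTTh a b).
Proof. have := s_w; have := s_tr; have := sh; have := s_v; rewrite /hTTh; smt. Qed.
Lemma p_hTT a b : pcz (hTTh a b).
Proof.
have := p_w; have := p_tr; have := ph; have := p_v; rewrite /hTTh /HS /HV.
by move=> ? ? ? ?; pct.
Qed.

Lemma Div_hTT b : Div hTTh b = fun _ => 0.
Proof.
have := s_w; have := s_tr; have := sh; have := s_v => sv sh' st sw.
apply/funext => x; rewrite /hTTh Div_B; [ | smt .. ].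
rewrite Div_B; [ | smt .. ].
rewrite Div_HS // Div_HV // divv_v partial_cst box_v /Fh ccE /Div /=.
ring.
Qed.

Lemma tr_hTT : (fun x => \sum_(a < n) meta a * hTTh a a x) = fun _ => 0.
Proof.
apply/funext => x; rewrite /hTTh /HS /HV.
have E : forall a : 'I_n, meta a * (h a a x - (partial a (partial a wh) x -
       n%:R^-1 * etam a a * box wh x + n%:R^-1 * etam a a * trh x) -
       (partial a (vh a) x + partial a (vh a) x)) =
    meta a * h a a x - meta a * partial a (partial a wh) x
    + (n%:R^-1 * box wh x) * (meta a * etam a a) - (n%:R^-1 * trh x) * (meta a * etam a a)
    - 2 * (meta a * partial a (vh a) x).
  by move=> a; ring.
under eq_bigr => a _ do rewrite E.
rewrite !sumrB !big_split /= !sumrN -!mulr_sumr.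
have -> : \sum_(a < n) meta a * etam a a = n%:R :> R.
  by rewrite -sum_meta2; apply: eq_bigr => a _; rewrite /etam eqxx.
have := divv_v; rewrite /divv => /(congr1 (fun f => f x)) /= ->.
rewrite -/(trh x) -/(box wh x).
rewrite mulrAC (mulVf n0) mulrAC (mulVf n0); ring.
Qed.

Lemma swap_last (A B p q : R) : A - B - (p + q) = A - B - (q + p).
Proof. by rewrite (addrC p). Qed.

Lemma sym_hTT a b : hTTh a b = hTTh b a.
Proof.
apply/funext => x; rewrite /hTTh /HS /HV (hsym a b) (@etamC R n a b).
rewrite (schwarz (F:=wh) a b); last exact: s_w.
exact: swap_last.
Qed.

Definition dec (w : pt -> R) (v : 'I_n -> pt -> R) (hTT : 'I_n -> 'I_n -> pt -> R) : Prop :=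
    [/\ smooth w /\ pc_scalar w,
        (forall a, smooth (v a)) /\ pc_covector v,
        [/\ forall a b, hTT a b = hTT b a,
            forall a b, smooth (hTT a b) & pc_tensor2 hTT],
        [/\ (fun x => \sum_(a < n) meta a * partial a (v a) x) = (fun _ => 0),
        (forall b, (fun x => \sum_(a < n) meta a * partial a (hTT a b) x)
                   = (fun _ => 0)) &
        (fun x => \sum_(a < n) meta a * hTT a a x) = (fun _ => 0)] &
        forall a b x,
          h a b x =
            (partial a (partial b w) x - n%:R^-1 * etam a b * box w x
               + n%:R^-1 * etam a b * trh x)
            + (partial a (v b) x + partial b (v a) x)
            + hTT a b x].

Lemma solve3 (D A B : R) : D = A + B + (D - A - B).
Proof. ring. Qed.

Lemma exist_dec : dec wh vh hTTh.
Proof.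
split.
- split; [exact: s_w | exact: pcz_scalar p_w].
- split; [exact: s_v | apply: pc_cov; exact: p_v].
- split; [exact: sym_hTT | exact: s_hTT | apply: pc_ten; exact: p_hTT].
- split; [exact: divv_v | exact: Div_hTT | exact: tr_hTT].
- move=> a b x; rewrite /hTTh /HS /HV; exact: solve3.
Qed.

Lemma solve3' (D A B C : R) : D = A + B + C -> C = D - A - B.
Proof. by move=> ->; ring. Qed.

Lemma sum_lin3 (c1 c2 : R) (X Y Z : 'I_n -> R) :
  \sum_(b < n) meta b * (c1 * X b + c2 * Y b + Z b) =
  c1 * \sum_(b < n) meta b * X b + c2 * \sum_(b < n) meta b * Y b + \sum_(b < n) meta b * Z b.
Proof. rewrite !mulr_sumr -!big_split /=; apply: eq_bigr => b _; ring. Qed.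

Lemma alg1 (c m X Y : R) : c * X + m * Y + 0 - m * Y = c * X.
Proof. ring. Qed.

Lemma uniq_dec w' v' T : dec w' v' T -> [/\ w' = wh, v' = vh & T = hTTh].
Proof.
case=> [[sw' pw'] [sv' pv'] [symT sT pT] [dv' dT trT] Eh].
have pw : pcz w' := scalar_pcz pw'.
have pv a : pcz (v' a) := cov_pcz a pv'.
have pTT a b : pcz (T a b) := ten_pcz a b pT.
have dv : divv v' = fun _ => 0 := dv'.
have str := s_tr; have sh' := sh.
have hE : forall a b, h a b = fun x => HS w' trh a b x + HV v' a b x + T a b x.
  by move=> a b; apply/funext => x; exact: Eh.
have Dh : forall b, Div h b = fun x => (1 - n%:R^-1) * partial b (box w') x
             + n%:R^-1 * partial b trh x + box (v' b) x.
  move=> b.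
  have -> : Div h b = Div (fun a b x => HS w' trh a b x + HV v' a b x + T a b x) b.
    by rewrite /Div; apply/funext => x; apply: eq_bigr => a _; rewrite hE.
  rewrite Div_D; [ | smt .. ]. rewrite Div_D; [ | smt .. ].
  rewrite Div_HS // Div_HV // dv partial_cst.
  have DT : Div T b = fun _ => 0 := dT b.
  by rewrite DT; apply/funext => x /=; rewrite !addr0.
have S_eq : Sh = fun x => (1 - n%:R^-1) * box (box w') x.
  apply/funext => x; rewrite /Sh -sum_Div //.
  have E2 : forall b, partial b (Div h b) x = (1 - n%:R^-1) * partial b (partial b (box w')) x
      + n%:R^-1 * partial b (partial b trh) x + partial b (box (v' b)) x.
    move=> b; rewrite Dh pD; [ | smt .. ]. rewrite pD; [ | smt .. ].
    rewrite pZ; [ | smt .. ]. rewrite pZ; [ | smt .. ]. by [].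
  under eq_bigr => b _ do rewrite E2.
  rewrite sum_lin3 divv_box // dv box_cst0.
  change (\sum_(b < n) meta b * partial b (partial b (box w')) x) with (box (box w') x).
  change (\sum_(b < n) meta b * partial b (partial b trh) x) with (box trh x).
  exact: alg1.
have sbw : smooth (box w') by smt.
have pbw : pcz (box w') by pct.
have sbbw : smooth (box (box w')) by smt.
have pbbw : pcz (box (box w')) by pct.
have GS : G Sh = fun x => (1 - n%:R^-1) * box w' x.
  rewrite S_eq (GZ _ sbbw pbbw) (Gbox sbw pbw); reflexivity.
have ew : w' = wh.
  apply/funext => x; rewrite /wh GS (GZ _ sbw pbw) (Gbox sw' pw) mulrA -ccE kc.
  exact: (esym (mul1r _)).
move: Dh; rewrite ew => Dh.
have bv : forall b, box (v' b) = Fh wh b.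
  move=> b; apply/funext => y; rewrite /Fh.
  have := congr1 (fun f => f y) (Dh b); rewrite /Div /= => ->.
  rewrite ccE; ring.
have ev : v' = vh.
  apply/funext => b; rewrite /vh -bv Gbox //; smt.
split => //.
apply/funext => a; apply/funext => b; apply/funext => x.
rewrite /hTTh /HS /HV -ew -ev; apply: solve3'; exact (Eh a b x).
Qed.

End Main.

Unset Implicit Arguments. Set Strict Implicit. Set Printing Implicit Defensive.

Theorem proposition2p1 (R : realType) (n : nat)
  (G : ('rV[R]_n -> R) -> ('rV[R]_n -> R)) (hG : is_retarded_green G)
  (hn : (2 <= n)%N)
  (h : 'I_n -> 'I_n -> 'rV[R]_n -> R)
  (hsym : forall a b, h a b = h b a)
  (hsmooth : forall a b, smooth (h a b))
  (hpc : pc_tensor2 h) :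
  let tr := fun x => \sum_(a < n) meta a * h a a x in
  let decomp := fun (w : 'rV[R]_n -> R) (v : 'I_n -> 'rV[R]_n -> R)
                    (hTT : 'I_n -> 'I_n -> 'rV[R]_n -> R) =>
    [/\ smooth w /\ pc_scalar w,
        (forall a, smooth (v a)) /\ pc_covector v,
        [/\ forall a b, hTT a b = hTT b a,
            forall a b, smooth (hTT a b) & pc_tensor2 hTT],
        [/\ (fun x => \sum_(a < n) meta a * partial a (v a) x) = (fun _ => 0),
        (forall b, (fun x => \sum_(a < n) meta a * partial a (hTT a b) x)
                   = (fun _ => 0)) &
        (fun x => \sum_(a < n) meta a * hTT a a x) = (fun _ => 0)] &
        forall a b x,
          h a b x =
            (partial a (partial b w) x - n%:R^-1 * etam a b * box w x
               + n%:R^-1 * etam a b * tr x)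
            + (partial a (v b) x + partial b (v a) x)
            + hTT a b x] in
  exists w v hTT,
    [/\ decomp w v hTT,
        (forall w' v' hTT', decomp w' v' hTT' ->
           [/\ w' = w, v' = v & hTT' = hTT]),
        w = (fun x => n%:R / (n%:R - 1) *
               G (G (fun y => \sum_(a < n) \sum_(b < n)
                         meta a * meta b * partial a (partial b (h a b)) y
                       - n%:R^-1 * box tr y)) x) &
        v = (fun b => G (fun y => \sum_(a < n) meta a * partial a (h a b) y
                          - n%:R^-1 * partial b tr y
                          - (n%:R - 1) / n%:R * partial b (box w) y))].

Proof.
move=> tr decomp.
exists (wh G h), (vh G h), (hTTh G h); split.
- exact: (exist_dec hG hn hsym hsmooth hpc).
- move=> w' v' hTT' H.
  exact: (uniq_dec hG hn hsmooth H).
- reflexivity.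
- reflexivity.
Qed.
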